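(* Let $q$ be a positive multiple of $24$. Then for every $m\in\mathbb{Z}$ with $q\nmid 24m$, one has $|\widehat{f_q}(-m)|\le\frac1{\sqrt5}$.
   Context: $e(\theta):=e^{2\pi i\theta}$. For $f:\mathbb{Z}/q\mathbb{Z}\to\mathbb{C}$, $\widehat f(r):=\frac1q\sum_{x\in\mathbb{Z}/q\mathbb{Z}}f(x)e(-rx/q)$, and $f_q(t):=\#\{x\in\mathbb{Z}/q\mathbb{Z}:x^2=t\}$. *)

(* Defs.v *)
From HB Require Import structures.
From mathcomp Require Import all_boot all_order all_algebra.
From mathcomp Require Import complex.
From mathcomp Require Import reals trigo.
Set Implicit Arguments. Unset Strict Implicit. Unset Printing Implicit Defensive.
Import Order.TTheory GRing.Theory Num.Theory.
Local Open Scope ring_scope.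
Local Open Scope complex_scope.

(* e(theta) := exp(2 pi i theta) = cos(2 pi theta) + i sin(2 pi theta) *)
Definition ee (R : realType) (theta : R) : R[i] :=
  (cos (2 * pi * theta)) +i* (sin (2 * pi * theta)).

(* Fourier transform on Z/qZ (q >= 2, elements of 'Z_q represented by 0..q-1):
   hat f(r) = 1/q sum_x f(x) e(-r x / q). *)
Definition fourier (R : realType) (q : nat) (f : 'Z_q -> R[i]) (r : int) : R[i] :=
  (q%:R)^-1 * \sum_(x : 'Z_q) f x * ee (- ((r%:~R * (val x)%:R) / q%:R) : R).

Definition fq (q : nat) (t : 'Z_q) : nat := #|[set x : 'Z_q | x * x == t]|.

(* Main.v *)
Require Import Defs.
From HB Require Import structures.
From mathcomp Require Import all_boot all_order all_algebra.
From mathcomp Require Import complex.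
From mathcomp Require Import reals trigo.
From mathcomp Require Import lra ring.
Import Order.TTheory GRing.Theory Num.Theory.
Local Open Scope ring_scope.
Local Open Scope complex_scope.

Section EE.
Variable R : realType.
Implicit Types a b : R.

Lemma ee_add a b : ee (a + b) = ee a * ee b.
Proof.
rewrite /ee mulrDr cosD sinD.
apply/eqP; rewrite eq_complex /=; apply/andP; split; apply/eqP; lra.
Qed.

Lemma ee0 : ee (0 : R) = 1.
Proof. by rewrite /ee mulr0 cos0 sin0. Qed.

Lemma ee1 : ee (1 : R) = 1.
Proof. by rewrite /ee mulr1 mulr_natl cos2pi sin2pi. Qed.

Lemma ee_opp a : ee (- a) = conjc (ee a).
Proof. by rewrite /ee mulrN cosN sinN. Qed.

Lemma ee_mulN a : ee a * ee (- a) = 1.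
Proof. by rewrite -ee_add subrr ee0. Qed.

Lemma ee_nat (n : nat) : ee (n%:R : R) = 1.
Proof. elim: n => [|n IH]; first by rewrite ee0. by rewrite -natr1 ee_add IH ee1 mulr1. Qed.

Lemma ee_int (n : int) : ee (n%:~R : R) = 1.
Proof.
case: n => n; first by rewrite ee_nat.
by rewrite NegzE rmorphN /= ee_opp -pmulrn ee_nat conjc1.
Qed.

Lemma ee_norm a : ee a * conjc (ee a) = 1.
Proof. by rewrite -ee_opp ee_mulN. Qed.

Lemma conjE (x : R[i]) : Num.conj x = conjc x.
Proof. by []. Qed.

Lemma ee_neq1 a : 0 < a < 1 -> ee a != 1.
Proof.
move=> /andP[a0 a1]; apply/eqP => h.
have hw : ee (a / 2) * ee (a / 2) = 1 by rewrite -ee_add -splitr.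
have hs : 0 < sin (2 * pi * (a / 2)).
  apply: sin_gt0_pi; have pi0 := @pi_gt0 R.
  have -> : 2 * pi * (a / 2) = pi * a.
    by field.
  apply/andP; split; first exact: mulr_gt0.
  by rewrite -{2}[pi]mulr1 ltr_pM2l.
have : (ee (a/2) - 1) * (ee (a/2) + 1) = 0.
  by rewrite mulrDr mulr1 mulrBl hw mul1r addrA subrK subrr.
move/eqP; rewrite mulf_eq0 => /orP[]; rewrite ?subr_eq0 ?addr_eq0 => /eqP /(congr1 (@complex.Im R)) /=.
- by move=> hi; move: hs; rewrite hi ltxx.
- by move=> hi; move: hs; rewrite hi oppr0 ltxx.
Qed.
End EE.

Section Phi.
Variables (R : realType) (q : nat).
Hypothesis hq1 : (1 < q)%N.

Definition phi (n : int) : R[i] := ee ((n%:~R : R) / q%:R).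

Lemma q_neq0 : (q%:R : R) != 0.
Proof. by rewrite pnatr_eq0 -lt0n ltnW. Qed.

Lemma phiD a b : phi (a + b) = phi a * phi b.
Proof. by rewrite /phi rmorphD /= mulrDl ee_add. Qed.

Lemma phi0 : phi 0 = 1.
Proof. by rewrite /phi mul0r ee0. Qed.

Lemma phi_mulq k : phi (q%:Z * k) = 1.
Proof.
rewrite /phi rmorphM /= -[(q%:Z)%:~R]/(q%:R : R) mulrAC divff ?q_neq0 // mul1r.
exact: ee_int.
Qed.

Lemma phiN a : phi (- a) = conjc (phi a).
Proof. by rewrite /phi rmorphN /= mulNr ee_opp. Qed.

Lemma phi_norm a : phi a * conjc (phi a) = 1.
Proof. exact: ee_norm. Qed.

Lemma phi_mulmod m n : phi (m * (n %% q)%Z) = phi (m * n).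
Proof.
rewrite {2}(divz_eq n q).
have -> : m * ((n %/ q)%Z * q + (n %% q)%Z) = q%:Z * (m * (n %/ q)%Z) + m * (n %% q)%Z by ring.
by rewrite phiD phi_mulq mul1r.
Qed.

Lemma phi_eq1 n : phi n = 1 -> (q%:Z %| n)%Z.
Proof.
move=> h.
have q0 : (q%:Z != 0) by rewrite eqz_nat -lt0n ltnW.
have hr : phi (n %% q)%Z = 1.
  by move: h; rewrite -[(n %% q)%Z]mul1r phi_mulmod mul1r.
apply/dvdz_mod0P; apply/eqP; apply: contraT => hne.
have r0 : 0 <= (n %% q)%Z := modz_ge0 n q0.
have rq : (n %% q)%Z < q%:Z by rewrite ltz_pmod // ltz_nat ltnW.
suff: ee ((((n %% q)%Z)%:~R : R) / q%:R) != 1 by rewrite /phi in hr; rewrite hr eqxx.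
apply: ee_neq1.
have qp : (0 : R) < q%:R by rewrite ltr0n ltnW.
apply/andP; split.
  by rewrite divr_gt0 // ltr0z lt_neqAle eq_sym hne.
by rewrite ltr_pdivrMr // mul1r -[q%:R]/((q%:Z)%:~R) ltr_int.
Qed.
End Phi.

Section Zq.
Variables (R : realType) (q : nat) (m : int).
Hypothesis hq1 : (1 < q)%N.

Definition Phi (x : 'Z_q) : R[i] := @phi R q (m * (val x)%:Z).

Lemma Zp_val_add (x y : 'Z_q) : val (x + y) = ((val x + val y) %% q)%N.
Proof. by rewrite /= {3}(Zp_cast hq1). Qed.

Lemma PhiD x y : Phi (x + y) = Phi x * Phi y.
Proof.
by rewrite /Phi Zp_val_add -modz_nat phi_mulmod // PoszD mulrDr phiD.
Qed.

Lemma Phi0 : Phi 0 = 1.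
Proof. by rewrite /Phi /= mulr0 phi0. Qed.

Lemma PhiMn x n : Phi (x *+ n) = Phi x ^+ n.
Proof. by elim: n => [|n IH]; rewrite ?Phi0 // mulrS PhiD IH exprS. Qed.

Lemma PhiN x : Phi (- x) = conjc (Phi x).
Proof.
have h : Phi x * Phi (- x) = 1 by rewrite -PhiD subrr Phi0.
have h2 : Phi x * conjc (Phi x) = 1 by apply: phi_norm.
have nz : Phi x != 0 by apply/eqP => e; move: h; rewrite e mul0r => /eqP; rewrite eq_sym oner_eq0.
by apply: (mulfI nz); rewrite h h2.
Qed.

Lemma Zp_natq : ((Zp_trunc q).+2%:R : 'Z_q) = 0.
Proof. by apply: val_inj; rewrite Zp_nat /= modnn. Qed.

Lemma card_Zq : #|'Z_q| = q.
Proof. by rewrite card_ord Zp_cast. Qed.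

Lemma sum_Phi_lin (c : 'Z_q) :
  \sum_(y : 'Z_q) Phi (y * c) = if Phi c == 1 then (q%:R : R[i]) else 0.
Proof.
have -> : \sum_(y : 'Z_q) Phi (y * c) = \sum_(i < (Zp_trunc q).+2) Phi c ^+ i.
  by apply: eq_bigr => y _; rewrite -{1}(natr_Zp y) mulr_natl PhiMn.
case: eqP => [->|ne].
  rewrite (eq_bigr (fun _ => 1)) ?sumr_const ?card_ord ?(Zp_cast hq1) // => i _; by rewrite expr1n.
have : (Phi c - 1) * \sum_(i < (Zp_trunc q).+2) Phi c ^+ i = 0.
  by rewrite -subrX1 -PhiMn -mulr_natr Zp_natq mulr0 Phi0 subrr.
by move/eqP; rewrite mulf_eq0 subr_eq0 (negbTE (introN eqP ne)) => /eqP.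
Qed.
Lemma normPhi x : `|Phi x| = 1.
Proof.
have h : `|Phi x| ^+ 2 = 1 ^+ 2 by rewrite normCK conjE expr1n; apply: phi_norm.
by apply/eqP; rewrite -(@eqrXn2 _ 2) // h.
Qed.

Definition S : R[i] := \sum_(y : 'Z_q) Phi (y * y).

Lemma S_sq : S * conjc S =
  \sum_(h : 'Z_q) Phi (h * h) * (if Phi (h + h) == 1 then (q%:R : R[i]) else 0).
Proof.
have -> : conjc S = \sum_(y : 'Z_q) Phi (- (y * y)).
  rewrite /S; apply: (big_ind2 (fun a b => conjc a = b)).
  - exact: conjc0.
  - by move=> a1 b1 a2 b2 <- <-; apply: rmorphD.
  - by move=> y _; rewrite PhiN.
rewrite /S mulr_sumr.
under eq_bigr => y _.
  rewrite mulr_suml.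
  under eq_bigr => x _ do rewrite -PhiD.
  rewrite (reindex_inj (addrI y)) /=.
  under eq_bigr => h _.
    have -> : (y + h) * (y + h) + - (y * y) = h * h + y * (h + h) by ring.
    rewrite PhiD; over.
  over.
rewrite /= exchange_big /=; apply: eq_bigr => h _.
by rewrite -mulr_sumr sum_Phi_lin.
Qed.

Lemma normS2 : `|S| ^+ 2 <= (q * #|[set h : 'Z_q | Phi (h + h) == 1]|)%:R.
Proof.
rewrite -[X in X <= _]ger0_norm ?exprn_ge0 // normCK conjE S_sq.
apply: le_trans (ler_norm_sum _ _ _) _.
rewrite natrM -sumr_const mulr_sumr [X in _ <= X]big_mkcond /=.
apply: ler_sum => h _; rewrite normrM normPhi mul1r inE mulr1.
by case: ifP => _; rewrite ?normr_nat ?normr0.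

Qed.
End Zq.

Lemma count_bound (q k : nat) (hq1 : (1 < q)%N) (hk : ~~ (q %| 12 * k)%N)
  (A : {set 'Z_q}) (HA : forall h, h \in A -> (q %| k * val h)%N) :
  (5 * #|A| <= q)%N.
Proof.
have q0 : (0 < q)%N by apply: ltnW.
set g := gcdn q k.
have g0 : (0 < g)%N by rewrite gcdn_gt0 q0.
set t := (q %/ g)%N.
have hqt : (t * g = q)%N by rewrite divnK // dvdn_gcdl.
have gk : (g %| k)%N by apply: dvdn_gcdr.
have tdiv : forall h, h \in A -> (t %| val h)%N.
  move=> h hA.
  have : (q %| gcdn (k * val h) (q * val h))%N by rewrite dvdn_gcd HA // dvdn_mulr.
  rewrite -muln_gcdl gcdnC -/g -{1}hqt [(g * _)%N]mulnC.
  by rewrite dvdn_pmul2r.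
have t5 : (5 <= t)%N.
  rewrite leqNgt; apply/negP => tl.
  have t12 : (t %| 12)%N.
    have t0 : (0 < t)%N by move: hqt q0; case: (t) => //= <-; rewrite mul0n.
    by move: t0 tl; case: (t) => [|[|[|[|[|]]]]].
  by move: hk; rewrite -hqt dvdn_mul.
have cardA : (#|A| <= g)%N.
  move: g0; case Eg: g => [//|g'] _.
  pose f := fun h : 'Z_q => (inord (val h %/ t) : 'I_g'.+1).
  have lt : forall h : 'Z_q, (val h %/ t <= g')%N.
    move=> h; rewrite -ltnS -Eg ltn_divLR; last by move: t5; case: (t).
    by rewrite mulnC hqt; case: h => n /=; rewrite (Zp_cast hq1).
  rewrite -[g'.+1]card_ord; apply: (@leq_card_in _ _ f) => h1 h2 H1 H2 /(congr1 (@nat_of_ord _)).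
  rewrite /f !inordK ?ltnS ?lt // => e.
  by apply: val_inj; rewrite -(divnK (tdiv _ H1)) -(divnK (tdiv _ H2)) e.
have : (5 * g <= t * g)%N by rewrite leq_mul2r t5 orbT.
rewrite hqt => H; exact: leq_trans (leq_mul (leqnn 5) cardA) H.
Qed.

Theorem lemma3p4 (R : realType) (q : nat) (hq : (0 < q)%N) (h24 : (24 %| q)%N)
  (m : int) (hm : ~~ (q%:Z %| 24 * m)%Z) :
  `| fourier (fun t : 'Z_q => ((fq t)%:R : R[i])) (- m) | <= ((Num.sqrt (5 : R))^-1)%:C.
Proof.
have hq1 : (1 < q)%N by apply: leq_trans (dvdn_leq hq h24).
have hF : fourier (fun t : 'Z_q => ((fq t)%:R : R[i])) (- m) = (q%:R)^-1 * S R q m.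
  rewrite /fourier; congr (_ * _); rewrite /S.
  rewrite [RHS](partition_big (fun y : 'Z_q => y * y) xpredT) //=; apply: eq_bigr => x _.
  rewrite (eq_bigr (fun _ => Phi R q m x)); last by move=> y /eqP ->.
  rewrite (eq_bigl (fun i => i \in [set y : 'Z_q | y * y == x])); last by move=> i; rewrite inE.
  rewrite sumr_const -[RHS]mulr_natl /fq; congr (_ * _).
  rewrite /Phi /phi; congr (ee _).
  by rewrite intrM rmorphN /= !mulNr opprK.
set A := [set h : 'Z_q | Phi R q m (h + h) == 1].
have hA : (5 * #|A| <= q)%N.
  apply: (@count_bound q (2 * `|m|)%N hq1).
    by move: hm; rewrite dvdzE abszM mulnA.
  move=> h; rewrite inE PhiD // => /eqP E.
  have : @phi R q (m * (val h)%:Z + m * (val h)%:Z) = 1 by rewrite phiD; exact: E.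
  move=> /(@phi_eq1 R q hq1).
  have -> : m * (val h)%:Z + m * (val h)%:Z = (2 * m) * (val h)%:Z by ring.
  by rewrite dvdzE !abszM.
have hS : `|S R q m| ^+ 2 * 5%:R <= (q * q)%:R.
  apply: le_trans (ler_wpM2r _ (normS2 R q m hq1)) _; first by rewrite ler0n.
  by rewrite -natrM ler_nat -mulnA [(#|_| * 5)%N]mulnC leq_mul2l hA orbT.
rewrite hF normrM normfV normr_nat.
have q0 : (0 : R[i]) < q%:R by rewrite ltr0n.
have s5 : (0 : R) < Num.sqrt 5 by rewrite sqrtr_gt0.
rewrite -(@ler_pXn2r _ 2) //; last first.
  by rewrite nnegrE ler0c invr_ge0 ltW.
  by rewrite nnegrE mulr_ge0 // invr_ge0 ler0n.
rewrite -rmorphXn /= exprVn sqr_sqrtr ?ler0n // fmorphV /= rmorph_nat.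
rewrite exprMn exprVn mulrC ler_pdivrMr ?exprn_gt0 // mulrC ler_pdivlMr ?ltr0n //.
by rewrite -natrX expnS expn1.
Qed.
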